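(* Let $q$ be a prime power, let $d+1$ be a divisor of $q-1$, and let $f:\mathbb{F}_q\to\mathbb{F}_q$ be $(d+1)$-divisible and differentially $d$-uniform. Then $f$ is almost-$(d+1)$-to-1.
   Context: For a divisor $k$ of $q-1$, $f$ is $k$-divisible if $f(x)=f'(x^k)$ for some map $f':\mathbb{F}_q\to\mathbb{F}_q$. $f$ is differentially $d$-uniform if $d=\max_{a\neq 0,\,b\in\mathbb{F}_q}|\{x\in\mathbb{F}_q: f(x+a)-f(x)=b\}|$. $f$ is almost-$k$-to-1 if there is a unique element of $\mathrm{Im}(f)$ with exactly one preimage and every other element of $\mathrm{Im}(f)$ has exactly $k$ preimages. *)

(* Defs.v *)
From HB Require Import structures.
From mathcomp Require Import all_boot all_order all_algebra all_field.
Set Implicit Arguments. Unset Strict Implicit. Unset Printing Implicit Defensive.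
Import GRing.Theory.
Local Open Scope ring_scope.

Definition divisible (F : finFieldType) (k : nat) (f : F -> F) : Prop :=
  exists f' : F -> F, forall x : F, f x = f' (x ^+ k).

Definition delta_count (F : finFieldType) (f : F -> F) (a b : F) : nat :=
  #|[set x : F | f (x + a) - f x == b]|.

Definition diff_uniformity (F : finFieldType) (f : F -> F) : nat :=
  \max_(a : F | a != 0 :> F) \max_(b : F) delta_count f a b.

Definition diff_uniform (F : finFieldType) (d : nat) (f : F -> F) : Prop :=
  diff_uniformity f = d.

Definition npreim (F : finFieldType) (f : F -> F) (y : F) : nat :=
  #|[set x : F | f x == y]|.

Definition almost_k_to_1 (F : finFieldType) (k : nat) (f : F -> F) : Prop :=
  exists y0 : F,
    [/\ y0 \in codom f, npreim f y0 = 1%N,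
        (forall y, y \in codom f -> npreim f y = 1%N -> y = y0) &
        (forall y, y \in codom f -> y != y0 -> npreim f y = k)].

(* Main.v *)
Require Import Defs.
From mathcomp Require Import all_boot all_order all_algebra all_field.
From mathcomp Require Import cyclic.
Set Implicit Arguments. Unset Strict Implicit. Unset Printing Implicit Defensive.
Import GRing.Theory.
Local Open Scope ring_scope.

Lemma prim_k (F : finFieldType) (k : nat) : (0 < k)%N -> (k %| #|F|.-1)%N ->
  exists z : F, k.-primitive_root z.
Proof.
move=> k0 kd.
set rs := enum (predC1 (0:F)).
have szrs : size rs = #|F|.-1 by rewrite -cardE (cardC1 (0:F)).
have n0 : (0 < #|F|.-1)%N.
  by rewrite -(cardC1 (0:F)); apply/card_gt0P; exists 1; rewrite !inE oner_eq0.
have allr : all (#|F|.-1).-unity_root rs.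
  apply/allP => x; rewrite mem_enum /= => x0.
  rewrite unity_rootE; apply/eqP; apply: (mulfI x0).
  have F0 : (0 < #|F|)%N by apply/card_gt0P; exists 0.
  by rewrite -exprS prednK // mulr1 expf_card.
have := has_prim_root n0 allr (enum_uniq _); rewrite szrs leqnn => /(_ isT).
case/hasP => w _ pw; exists (w ^+ (#|F|.-1 %/ k)); exact: dvdn_prim_root.
Qed.
Theorem theorem3p2 (F : finFieldType) (d : nat) (f : F -> F) :
  (d.+1 %| #|F|.-1)%N ->
  divisible d.+1 f ->
  diff_uniform d f ->
  almost_k_to_1 d.+1 f.
Proof.
move=> kd [f' Hf'] Hd.
have dbound a b : a != 0 -> (delta_count f a b <= d)%N.
  move=> a0; rewrite -Hd /diff_uniformity.
  apply: leq_trans (leq_bigmax_cond (F := fun a => \max_(b : F) delta_count f a b) a a0).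
  exact: (@leq_bigmax _ (fun b => delta_count f a b) b).
have d1 : (0 < d)%N.
  apply: leq_trans (dbound 1 (f (0 + 1) - f 0) (oner_neq0 _)).
  by rewrite /delta_count card_gt0; apply/set0Pn; exists 0; rewrite inE.
pose n x := npreim f (f x).
pose m (x : F) := (\sum_(a : F | (a != 0)%R) (f (x + a)%R == f x))%N.
have nE x : n x = (m x).+1.
  rewrite /n /npreim -sum1_card big_mkcond /=.
  rewrite (reindex_inj (addrI x)) /= (bigD1 0) //=.
  rewrite addr0 inE eqxx add1n; congr _.+1.
  by apply: eq_bigr => a _; rewrite inE.
have up : (\sum_(x : F) m x <= \sum_(a : F | (a != 0)%R) d)%N.
  rewrite /m exchange_big /= big_mkcond [X in (_ <= X)%N]big_mkcond /=.
  apply: (@leq_sum F (index_enum F) predT) => a _; case: ifP => /= a0 //.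
  apply: leq_trans (dbound a 0 a0).
  rewrite /delta_count -sum1_card [X in (_ <= X)%N]big_mkcond /=.
  apply: (@leq_sum F (index_enum F) predT) => x _.
  by rewrite inE subr_eq0.
have [z pz] := prim_k (ltn0Sn d) kd.
have low x : x != 0 -> (d.+1 <= n x)%N.
  move=> x0.
  have sub : [set z ^+ i * x | i : 'I_d.+1] \subset [set y | f y == f x].
    apply/subsetP => y /imsetP [i _ ->]; rewrite inE !Hf' exprMn -exprM mulnC exprM.
    by rewrite (prim_expr_order pz) expr1n mul1r.
  apply: leq_trans (subset_leq_card sub).
  rewrite card_imset ?card_ord //.
  move=> i j /(mulIf x0) /eqP; rewrite (eq_prim_root_expr pz) !modn_small //.
  by move=> /eqP /val_inj.
pose g (a : F) := if a != 0 then d else 0%N.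
have gm i : (g i <= m i)%N.
  rewrite /g; case: ifP => // i0; by rewrite -ltnS -nE low.
have H := @leqif_sum F predT (fun i => g i == m i) g m
  (fun i _ => leqif_eq (gm i)).
have /forallP allg : [forall i, g i == m i].
  rewrite -H.2 eqn_leq H.1 /=.
  apply: leq_trans up _; rewrite big_mkcond; exact: leqnn.
have n0 : n 0 = 1%N by rewrite nE -(eqP (allg 0)) /g eqxx.
have nx x : x != 0 -> n x = d.+1 by move=> x0; rewrite nE -(eqP (allg x)) /g x0.
exists (f 0); split.
- exact: codom_f.
- exact: n0.
- move=> y /codomP [x ->]; have [-> //|x0] := eqVneq x 0.
  by rewrite -/(n x) nx // => -[d0]; rewrite d0 in d1.
- move=> y /codomP [x ->]; have [-> |x0] := eqVneq x 0; first by rewrite eqxx.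
  by move=> _; rewrite -/(n x) nx.
Qed.
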